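(* For all $k,\ell\in\mathbb N_0$, in $\mathrm{sVW}$ one has $b\circ(y^k\otimes y^\ell)\circ b^*=0$ in $\mathrm{Hom}(0,0)$; equivalently $b_iy_i^ky_{i+1}^\ell b_i^*=0$ for all $i\ge1$.
   Context: Work over $\mathbb C$. A supercategory is a category enriched in $\mathbb Z/2$-graded vector spaces with parity-preserving composition; in a monoidal supercategory the super interchange law $(f\otimes g)\circ(h\otimes k)=(-1)^{\bar g\bar h}(f\circ h)\otimes(g\circ k)$ holds for homogeneous morphisms. The affine VW supercategory $\mathrm{sVW}$ is the $\mathbb C$-linear strict monoidal supercategory generated by one object $\star$ and morphisms $s:\star\otimes\star\to\star\otimes\star$ (even), $b:\star\otimes\star\to\mathbb 1$ (odd), $b^*:\mathbb 1\to\star\otimes\star$ (odd), $y:\star\to\star$ (even), subject to: (R1) $s\circ s=1_{\star\otimes\star}$ and $(s\otimes 1)(1\otimes s)(s\otimes 1)=(1\otimes s)(s\otimes1)(1\otimes s)$; (R2) $(b\otimes 1_\star)\circ(1_\star\otimes b^* )=-1_\star$ and $(1_\star\otimes b)\circ(b^*\otimes 1_\star)=1_\star$; (R3) $(1_\star\otimes s)\circ(b^*\otimes 1_\star)=(s\otimes 1_\star)\circ(1_\star\otimes b^* )$ and $s\circ b^*=-b^*$; (R4) $1_\star\otimes y=s\circ(y\otimes 1_\star)\circ s+s+b^*\circ b$ and $b\circ(1_\star\otimes y)=b\circ(y\otimes 1_\star)+b$. Objects are identified with $a\in\mathbb N_0$; $b_i=1_{i-1}\otimes b\otimes 1_{a-i+1}$,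 $b_i^*=1_{i-1}\otimes b^*\otimes 1_{a-i+1}$, $y_i=1_{i-1}\otimes y\otimes 1_{a-i}$. *)

(* Defs.v *)
From HB Require Import structures.
From mathcomp Require Import all_boot all_order all_algebra.
Set Implicit Arguments. Unset Strict Implicit. Unset Printing Implicit Defensive.
Import GRing.Theory.
Local Open Scope ring_scope.

Definition castH (H : nat -> nat -> Type) (a a' b b' : nat)
  (e1 : a = a') (e2 : b = b') (f : H a b) : H a' b' :=
  match e1 in _ = x return H x b' with
  | erefl => match e2 in _ = y return H a y with erefl => f end
  end.

(* A K-linear strict monoidal supercategory whose objects are the natural
   numbers with tensor product of objects given by addition (i.e. the
   full monoidal subcategory on the tensor powers of one object).
   par a b p f  means "f : a -> b is homogeneous of parity p"
   (false = even, true = odd). *)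
Record MonSuperCat (K : fieldType) := MonSuperCat_ {
  hom : nat -> nat -> lmodType K;
  par : forall a b, bool -> hom a b -> Prop;
  par0 : forall a b p, par p (0 : hom a b);
  parD : forall a b p (c : K) (f g : hom a b),
      par p f -> par p g -> par p (c *: f + g);
  par_decomp : forall a b (f : hom a b),
      exists f0 f1, [/\ par false f0, par true f1 & f = f0 + f1];
  par_disj : forall a b (f : hom a b), par false f -> par true f -> f = 0;
  mcomp : forall a b c, hom b c -> hom a b -> hom a c;
  midm : forall a, hom a a;
  compDl : forall a b c (k : K) (f g : hom b c) (h : hom a b),
      mcomp (k *: f + g) h = k *: mcomp f h + mcomp g h;
  compDr : forall a b c (k : K) (f : hom b c) (g h : hom a b),
      mcomp f (k *: g + h) = k *: mcomp f g + mcomp f h;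
  compA : forall a b c d (f : hom c d) (g : hom b c) (h : hom a b),
      mcomp f (mcomp g h) = mcomp (mcomp f g) h;
  comp1f : forall a b (f : hom a b), mcomp (midm b) f = f;
  compf1 : forall a b (f : hom a b), mcomp f (midm a) = f;
  par_idm : forall a, par false (midm a);
  par_comp : forall a b c p q (f : hom b c) (g : hom a b),
      par p f -> par q g -> par (p (+) q) (mcomp f g);
  mtens : forall a b c d, hom a b -> hom c d -> hom (a + c) (b + d);
  tensDl : forall a b c d (k : K) (f g : hom a b) (h : hom c d),
      mtens (k *: f + g) h = k *: mtens f h + mtens g h;
  tensDr : forall a b c d (k : K) (f : hom a b) (g h : hom c d),
      mtens f (k *: g + h) = k *: mtens f g + mtens f h;
  par_tens : forall a b c d p q (f : hom a b) (g : hom c d),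
      par p f -> par q g -> par (p (+) q) (mtens f g);
  tens_idm : forall a c, mtens (midm a) (midm c) = midm (a + c);
  tensA : forall a b c d e g (f1 : hom a b) (f2 : hom c d) (f3 : hom e g),
      mtens f1 (mtens f2 f3)
      = @castH (fun x y => hom x y) _ _ _ _ (esym (addnA a c e)) (esym (addnA b d g)) (mtens (mtens f1 f2) f3);
  tens0f : forall a b (f : hom a b), mtens (midm 0) f = f;
  tensf0 : forall a b (f : hom a b),
      @castH (fun x y => hom x y) _ _ _ _ (addn0 a) (addn0 b) (mtens f (midm 0)) = f;
  interchange : forall a b c d e g p1 p2 p3 p4
      (f : hom b c) (g' : hom e g) (h : hom a b) (k : hom d e),
      par p1 f -> par p2 g' -> par p3 h -> par p4 k ->
      mcomp (mtens f g') (mtens h k) = (-1) ^+ (p2 && p3) *: mtens (mcomp f h) (mcomp g' k)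
}.

Arguments hom {K} _ _ _.
Arguments par {K} _ {_ _} _ _.
Arguments mcomp {K} _ {_ _ _} _ _.
Arguments midm {K} _ _.
Arguments mtens {K} _ {_ _ _ _} _ _.

Fixpoint hpow (K : fieldType) (C : MonSuperCat K) (a : nat) (f : hom C a a) (n : nat)
  : hom C a a :=
  match n with 0 => midm C a | n'.+1 => mcomp C f (hpow f n') end.

(* The generators s, b, b^*, y of sVW realized in C, subject to (R1)-(R4).
   Object a stands for the a-fold tensor power of the generating object. *)
Record sVW_rep (K : fieldType) (C : MonSuperCat K) := sVW_rep_ {
  s : hom C 2 2;
  b : hom C 2 0;
  bs : hom C 0 2;
  y : hom C 1 1;
  par_s : par C false s;
  par_b : par C true b;
  par_bs : par C true bs;
  par_y : par C false y;
  R1a : mcomp C s s = midm C 2;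
  R1b : mcomp C (mtens C s (midm C 1))
          (mcomp C (mtens C (midm C 1) s) (mtens C s (midm C 1)))
        = mcomp C (mtens C (midm C 1) s)
          (mcomp C (mtens C s (midm C 1)) (mtens C (midm C 1) s));
  R2a : mcomp C (mtens C b (midm C 1)) (mtens C (midm C 1) bs) = - midm C 1;
  R2b : mcomp C (mtens C (midm C 1) b) (mtens C bs (midm C 1)) = midm C 1;
  R3a : mcomp C (mtens C (midm C 1) s) (mtens C bs (midm C 1))
        = mcomp C (mtens C s (midm C 1)) (mtens C (midm C 1) bs);
  R3b : mcomp C s bs = - bs;
  R4a : mtens C (midm C 1) y
        = mcomp C s (mcomp C (mtens C y (midm C 1)) s) + s + mcomp C bs b;
  R4b : mcomp C b (mtens C (midm C 1) y) = mcomp C b (mtens C y (midm C 1)) + b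
}.

(* Main.v *)
Require Import Defs.
From HB Require Import structures.
From mathcomp Require Import all_boot all_order all_algebra.
Set Implicit Arguments. Unset Strict Implicit. Unset Printing Implicit Defensive.
Import GRing.Theory Num.Theory.
Local Open Scope ring_scope.

Notation H := Defs.hom.

Lemma castH_id (K : fieldType) (C : MonSuperCat K) a b (e1 : a = a) (e2 : b = b) (f : H C a b) :
  @castH (fun x y => H C x y) a a b b e1 e2 f = f.
Proof. by rewrite (eq_irrelevance e1 erefl) (eq_irrelevance e2 erefl). Qed.

Lemma xxx (K : fieldType) (V : lmodType K) (x : V) : x = x + x -> x = 0.
Proof. by move=> h; apply: (addrI x); rewrite addr0 -h. Qed.

Lemma compDl1 (K : fieldType) (C : MonSuperCat K) a b c (f g : H C b c) (h : H C a b) :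
  mcomp C (f + g) h = mcomp C f h + mcomp C g h.
Proof. by have := compDl 1 f g h; rewrite !scale1r. Qed.
Lemma compDr1 (K : fieldType) (C : MonSuperCat K) a b c (f : H C b c) (g h : H C a b) :
  mcomp C f (g + h) = mcomp C f g + mcomp C f h.
Proof. by have := compDr 1 f g h; rewrite !scale1r. Qed.
Lemma tensDl1 (K : fieldType) (C : MonSuperCat K) a b c d (f g : H C a b) (h : H C c d) :
  mtens C (f + g) h = mtens C f h + mtens C g h.
Proof. by have := tensDl 1 f g h; rewrite !scale1r. Qed.
Lemma tensDr1 (K : fieldType) (C : MonSuperCat K) a b c d (f : H C a b) (g h : H C c d) :
  mtens C f (g + h) = mtens C f g + mtens C f h.
Proof. by have := tensDr 1 f g h; rewrite !scale1r. Qed.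
Lemma comp0l (K : fieldType) (C : MonSuperCat K) a b c (h : H C a b) :
  mcomp C (0 : H C b c) h = 0.
Proof. by apply: xxx; rewrite -compDl1 addr0. Qed.
Lemma comp0r (K : fieldType) (C : MonSuperCat K) a b c (h : H C b c) :
  mcomp C h (0 : H C a b) = 0.
Proof. by apply: xxx; rewrite -compDr1 addr0. Qed.
Lemma tens0l (K : fieldType) (C : MonSuperCat K) a b c d (h : H C c d) :
  mtens C (0 : H C a b) h = 0.
Proof. by apply: xxx; rewrite -tensDl1 addr0. Qed.
Lemma tens0r (K : fieldType) (C : MonSuperCat K) a b c d (h : H C a b) :
  mtens C h (0 : H C c d) = 0.
Proof. by apply: xxx; rewrite -tensDr1 addr0. Qed.
Lemma compZl (K : fieldType) (C : MonSuperCat K) a b c (k : K) (f : H C b c) (h : H C a b) :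
  mcomp C (k *: f) h = k *: mcomp C f h.
Proof. by have := compDl k f 0 h; rewrite !addr0 comp0l addr0. Qed.
Lemma compZr (K : fieldType) (C : MonSuperCat K) a b c (k : K) (f : H C b c) (h : H C a b) :
  mcomp C f (k *: h) = k *: mcomp C f h.
Proof. by have := compDr k f h 0; rewrite !addr0 comp0r addr0. Qed.
Lemma tensZl (K : fieldType) (C : MonSuperCat K) a b c d (k : K) (f : H C a b) (h : H C c d) :
  mtens C (k *: f) h = k *: mtens C f h.
Proof. by have := tensDl k f 0 h; rewrite !addr0 tens0l addr0. Qed.
Lemma tensZr (K : fieldType) (C : MonSuperCat K) a b c d (k : K) (f : H C a b) (h : H C c d) :
  mtens C f (k *: h) = k *: mtens C f h.
Proof. by have := tensDr k f h 0; rewrite !addr0 tens0r addr0. Qed.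
Lemma compNl (K : fieldType) (C : MonSuperCat K) a b c (f : H C b c) (h : H C a b) :
  mcomp C (- f) h = - mcomp C f h.
Proof. by rewrite -scaleN1r compZl scaleN1r. Qed.
Lemma compNr (K : fieldType) (C : MonSuperCat K) a b c (f : H C b c) (h : H C a b) :
  mcomp C f (- h) = - mcomp C f h.
Proof. by rewrite -scaleN1r compZr scaleN1r. Qed.
Lemma tensNl (K : fieldType) (C : MonSuperCat K) a b c d (f : H C a b) (h : H C c d) :
  mtens C (- f) h = - mtens C f h.
Proof. by rewrite -scaleN1r tensZl scaleN1r. Qed.
Lemma tensNr (K : fieldType) (C : MonSuperCat K) a b c d (f : H C a b) (h : H C c d) :
  mtens C f (- h) = - mtens C f h.
Proof. by rewrite -scaleN1r tensZr scaleN1r. Qed.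

Lemma L1 (K : fieldType) (C : MonSuperCat K) n a b c (f : H C b c) (g : H C a b) :
  mcomp C (mtens C (midm C n) f) (mtens C (midm C n) g) = mtens C (midm C n) (mcomp C f g).
Proof.
have [f0 [f1 [pf0 pf1 ->]]] := par_decomp f.
have [g0 [g1 [pg0 pg1 ->]]] := par_decomp g.
have I := par_idm C n.
rewrite !(tensDr1, compDl1, compDr1).
rewrite (Defs.interchange I pf0 I pg0) (Defs.interchange I pf0 I pg1).
rewrite (Defs.interchange I pf1 I pg0) (Defs.interchange I pf1 I pg1).
by rewrite !comp1f /= !expr0 !scale1r.
Qed.

Lemma L2 (K : fieldType) (C : MonSuperCat K) n a b c (f : H C b c) (g : H C a b) :
  mcomp C (mtens C f (midm C n)) (mtens C g (midm C n)) = mtens C (mcomp C f g) (midm C n).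
Proof.
have [f0 [f1 [pf0 pf1 ->]]] := par_decomp f.
have [g0 [g1 [pg0 pg1 ->]]] := par_decomp g.
have I := par_idm C n.
rewrite !(tensDl1, compDl1, compDr1).
rewrite (Defs.interchange pf0 I pg0 I) (Defs.interchange pf0 I pg1 I).
rewrite (Defs.interchange pf1 I pg0 I) (Defs.interchange pf1 I pg1 I).
by rewrite !comp1f /= !expr0 !scale1r.
Qed.

Lemma L3 (K : fieldType) (C : MonSuperCat K) a b c d (f : H C a b) (g : H C c d) :
  mcomp C (mtens C f (midm C d)) (mtens C (midm C a) g) = mtens C f g.
Proof.
have [f0 [f1 [pf0 pf1 ->]]] := par_decomp f.
have [g0 [g1 [pg0 pg1 ->]]] := par_decomp g.
have Ia := par_idm C a. have Id := par_idm C d.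
rewrite !(tensDl1, tensDr1, compDl1, compDr1).
rewrite (Defs.interchange pf0 Id Ia pg0) (Defs.interchange pf0 Id Ia pg1).
rewrite (Defs.interchange pf1 Id Ia pg0) (Defs.interchange pf1 Id Ia pg1).
by rewrite !comp1f !compf1 /= !expr0 !scale1r.
Qed.

Lemma L4 (K : fieldType) (C : MonSuperCat K) a b c d p q (f : H C a b) (g : H C c d) :
  par C p f -> par C q g ->
  mcomp C (mtens C (midm C b) g) (mtens C f (midm C c)) = (-1) ^+ (q && p) *: mtens C f g.
Proof.
move=> pf pg.
by rewrite (Defs.interchange (par_idm C b) pg pf (par_idm C c)) comp1f compf1.
Qed.

Lemma castHK (K : fieldType) (C : MonSuperCat K) a a' b b' (e1 : a = a') (e2 : b = b') (f : H C a' b') :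
  @castH (fun x y => H C x y) _ _ _ _ e1 e2 (@castH (fun x y => H C x y) _ _ _ _ (esym e1) (esym e2) f) = f.
Proof. by case: a' / e1 f; case: b' / e2. Qed.

Lemma tensA_r (K : fieldType) (C : MonSuperCat K) a b c d e g (f1 : H C a b) (f2 : H C c d) (f3 : H C e g) :
  mtens C (mtens C f1 f2) f3 = @castH (fun x y => H C x y) _ _ _ _ (addnA a c e) (addnA b d g) (mtens C f1 (mtens C f2 f3)).
Proof. by rewrite tensA castHK. Qed.

Notation "f ⊗ g" := (mtens _ f g) (at level 33, left associativity).
Notation "f ∘ g" := (mcomp _ f g) (at level 37, right associativity).

Lemma Bp (K : fieldType) (C : MonSuperCat K) (V : sVW_rep C) :
  (midm C 1 ⊗ ((midm C 1 ⊗ b V) ∘ (s V ⊗ midm C 1))) ∘ (bs V ⊗ midm C 2) = s V.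
Proof.
rewrite -L1.
rewrite (tensA (midm C 1) (s V) (midm C 1)) castH_id.
rewrite -[midm C 2](tens_idm C 1 1).
rewrite -Defs.compA (tensA (bs V) (midm C 1) (midm C 1)) castH_id.
rewrite (L2 1 (midm C 1 ⊗ s V) (bs V ⊗ midm C 1)) (R3a V).
rewrite -(L2 1 (s V ⊗ midm C 1) (midm C 1 ⊗ bs V)).
rewrite (tensA_r (s V) (midm C 1) (midm C 1)) castH_id.
rewrite (tensA_r (midm C 1) (bs V) (midm C 1)) castH_id.
rewrite (tensA (midm C 1) (midm C 1) (b V)) castH_id tens_idm.
change (midm C (1+1)) with (midm C 2).
rewrite Defs.compA.
rewrite (L4 (par_s V) (par_b V)) expr0 scale1r -(L3 (s V) (b V)).
have ts := tensf0 (s V); rewrite castH_id in ts; rewrite ts.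
rewrite -Defs.compA -[midm C 2](tens_idm C 1 1) (tensA_r (midm C 1) (midm C 1) (b V)) castH_id.

rewrite (L1 1 (midm C 1 ⊗ b V) (bs V ⊗ midm C 1)) (R2b V) tens_idm compf1.
by [].
Qed.

Lemma Bmate (K : fieldType) (C : MonSuperCat K) (V : sVW_rep C) (f : H C 3 1) :
  par C true f ->
  (b V ⊗ midm C 1) ∘ (midm C 1 ⊗ ((midm C 1 ⊗ f) ∘ (bs V ⊗ midm C 2))) = f.
Proof.
move=> pf.
rewrite -(L1 1 (midm C 1 ⊗ f) (bs V ⊗ midm C 2)).
rewrite (tensA (midm C 1) (midm C 1) f) castH_id tens_idm.
change (midm C (1+1)) with (midm C 2).
rewrite Defs.compA (L3 (b V) f).
have h := L4 (par_b V) pf; rewrite tens0f expr1 scaleN1r in h.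
have -> : b V ⊗ f = - (f ∘ (b V ⊗ midm C 3)) by rewrite h opprK.
rewrite compNl -Defs.compA.
rewrite -[midm C 3](tens_idm C 1 2) (tensA (b V) (midm C 1) (midm C 2)) castH_id.
rewrite (tensA (midm C 1) (bs V) (midm C 2)) castH_id.
rewrite (L2 2 (b V ⊗ midm C 1) (midm C 1 ⊗ bs V)) (R2a V) tensNl tens_idm compNr.
by rewrite opprK; apply: compf1.
Qed.

Lemma capnat (K : fieldType) (C : MonSuperCat K) (V : sVW_rep C) :
  (b V ⊗ midm C 1) ∘ (midm C 1 ⊗ s V) = (midm C 1 ⊗ b V) ∘ (s V ⊗ midm C 1).
Proof.
have pB : par C true ((midm C 1 ⊗ b V) ∘ (s V ⊗ midm C 1)).
  exact: (par_comp (par_tens (par_idm C 1) (par_b V)) (par_tens (par_s V) (par_idm C 1))).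
by rewrite -[RHS](Bmate V pB) Bp.
Qed.

Lemma Tkink (K : fieldType) (C : MonSuperCat K) (V : sVW_rep C) :
  (b V ⊗ midm C 1) ∘ ((midm C 1 ⊗ s V) ∘ (bs V ⊗ midm C 1)) = - midm C 1.
Proof.
rewrite Defs.compA capnat -Defs.compA.
rewrite (L2 1 (s V) (bs V)) (R3b V) tensNl compNr (R2b V).
by [].
Qed.

Lemma bsb (K : fieldType) (C : MonSuperCat K) (V : sVW_rep C) :
  b V ∘ s V = b V.
Proof.
set g := b V ∘ s V.
have pg : par C true g by exact: (par_comp (par_b V) (par_s V)).
have e1 : g = g ∘ ((midm C 2 ⊗ b V) ∘ (midm C 1 ⊗ (bs V ⊗ midm C 1))).
  rewrite -[midm C 2](tens_idm C 1 1) (tensA_r (midm C 1) (midm C 1) (b V)) castH_id.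
  rewrite (L1 1 (midm C 1 ⊗ b V) (bs V ⊗ midm C 1)) (R2b V) tens_idm.
  by apply/esym; apply: compf1.
have e2 : g ∘ (midm C 2 ⊗ b V) = - (b V ∘ (g ⊗ midm C 2)).
  have h := L4 pg (par_b V); rewrite tens0f expr1 scaleN1r in h.
  rewrite h opprK -(L3 g (b V)).
  have ts := tensf0 g; rewrite castH_id in ts; by rewrite ts.
rewrite {1}e1 Defs.compA e2 compNl -Defs.compA.
rewrite -[midm C 2](tens_idm C 1 1) (tensA g (midm C 1) (midm C 1)) castH_id.
rewrite (tensA (midm C 1) (bs V) (midm C 1)) castH_id.
rewrite (L2 1 (g ⊗ midm C 1) (midm C 1 ⊗ bs V)).
rewrite /g -(L2 1 (b V) (s V)) -Defs.compA -(R3a V) Tkink tensNl tens_idm compNr opprK.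
by apply: compf1.
Qed.

Lemma hpowS_r (K : fieldType) (C : MonSuperCat K) a (f : H C a a) n :
  hpow f n.+1 = hpow f n ∘ f.
Proof.
elim: n => [|n IH] /=; first by rewrite comp1f compf1.
by rewrite -Defs.compA -IH.
Qed.

Lemma comm_pow (K : fieldType) (C : MonSuperCat K) a (f g : H C a a) n :
  f ∘ g = g ∘ f -> f ∘ hpow g n = hpow g n ∘ f.
Proof.
move=> e; elim: n => [|n IH] /=; first by rewrite comp1f compf1.
by rewrite Defs.compA e -Defs.compA IH Defs.compA.
Qed.

Definition y1 (K : fieldType) (C : MonSuperCat K) (V : sVW_rep C) : H C 2 2 := y V ⊗ midm C 1.
Definition y2 (K : fieldType) (C : MonSuperCat K) (V : sVW_rep C) : H C 2 2 := midm C 1 ⊗ y V.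

Lemma y12 (K : fieldType) (C : MonSuperCat K) (V : sVW_rep C) : y1 V ∘ y2 V = y2 V ∘ y1 V.
Proof.
rewrite /y1 /y2 (L3 (y V) (y V)) (L4 (par_y V) (par_y V)).
by rewrite expr0 scale1r.
Qed.

Lemma pow1 (K : fieldType) (C : MonSuperCat K) (V : sVW_rep C) k :
  hpow (y V) k ⊗ midm C 1 = hpow (y1 V) k.
Proof.
elim: k => [|k IH] /=; first by rewrite tens_idm.
by rewrite -(L2 1 (y V) (hpow (y V) k)) IH.
Qed.

Lemma pow2 (K : fieldType) (C : MonSuperCat K) (V : sVW_rep C) k :
  midm C 1 ⊗ hpow (y V) k = hpow (y2 V) k.
Proof.
elim: k => [|k IH] /=; first by rewrite tens_idm.
by rewrite -(L1 1 (y V) (hpow (y V) k)) IH.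
Qed.

Definition Hf (K : fieldType) (C : MonSuperCat K) (V : sVW_rep C) j k : H C 0 0 :=
  b V ∘ (hpow (y2 V) j ∘ (hpow (y1 V) k ∘ bs V)).
Definition Gf (K : fieldType) (C : MonSuperCat K) (V : sVW_rep C) j k : H C 0 0 :=
  b V ∘ (hpow (y2 V) j ∘ (s V ∘ (hpow (y1 V) k ∘ bs V))).

Lemma recA (K : fieldType) (C : MonSuperCat K) (V : sVW_rep C) j k :
  Hf V j.+1 k = Hf V j k.+1 + Hf V j k.
Proof.
rewrite /Hf /= -(Defs.compA (y2 V)) (Defs.compA (b V) (y2 V)) {1}/y2 (R4b V) -/(y1 V).
rewrite compDl1 -(Defs.compA (b V) (y1 V)) (Defs.compA (y1 V) (hpow (y2 V) j)).
rewrite (comm_pow j (y12 V)).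
by rewrite -!Defs.compA.
Qed.

Lemma sy1 (K : fieldType) (C : MonSuperCat K) (V : sVW_rep C) :
  s V ∘ y1 V = y2 V ∘ s V - midm C 2 - bs V ∘ b V.
Proof.
have e : y2 V ∘ s V = (s V ∘ (y1 V ∘ s V) + s V + bs V ∘ b V) ∘ s V by rewrite /y2 (R4a V).
rewrite e !compDl1 (R1a V) -(Defs.compA (bs V)) (bsb V).
rewrite -(Defs.compA (s V)) -(Defs.compA (y1 V)) (R1a V) compf1.
by rewrite [X in X - _]addrAC addrK addrK.
Qed.

Lemma recB (K : fieldType) (C : MonSuperCat K) (V : sVW_rep C) j k :
  Gf V j k.+1 = Gf V j.+1 k - Hf V j k - Hf V j 0 ∘ Hf V 0 k.
Proof.
rewrite /Gf /Hf /= -(Defs.compA (y1 V)) (Defs.compA (s V) (y1 V)) sy1.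
rewrite compDl1 compDl1 compNl compNl compDr1 compDr1 compDr1 compDr1 compNr compNr compNr compNr.
repeat rewrite comp1f.
rewrite -[y2 V ∘ hpow (y2 V) j]/(hpow (y2 V) j.+1) hpowS_r.
by repeat rewrite -Defs.compA.
Qed.

Lemma G0 (K : fieldType) (C : MonSuperCat K) (V : sVW_rep C) j :
  Gf V j 0 = - Hf V j 0.
Proof. by rewrite /Gf /Hf /= !comp1f (R3b V) !compNr. Qed.

Lemma G0' (K : fieldType) (C : MonSuperCat K) (V : sVW_rep C) k :
  Gf V 0 k = Hf V 0 k.
Proof. by rewrite /Gf /Hf /= !comp1f Defs.compA (bsb V). Qed.

Lemma halfz (K : numFieldType) (W : lmodType K) (x : W) : x = - x -> x = 0.
Proof.
move=> h.
have h2 : (2%:R : K) *: x = 0 by rewrite scaler_nat mulr2n {2}h subrr.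
have nz : (2%:R : K) != 0 by rewrite pnatr_eq0.
by rewrite -[x]scale1r -(mulVf nz) -scalerA h2 scaler0.
Qed.

Lemma stepN (K : numFieldType) (C : MonSuperCat K) (V : sVW_rep C) N :
  (forall j k, (j + k < N)%N -> Hf V j k = 0) ->
  forall j k, (j + k)%N = N -> Hf V j k = 0.
Proof.
move=> IH.
have hA : forall j k, (j + k).+1 = N -> Hf V j.+1 k = Hf V j k.+1.
  by move=> j k e; rewrite recA (IH j k) ?addr0 // -e.
have hH : forall j k, (j + k)%N = N -> Hf V j k = Hf V 0 N.
  elim=> [|j IHj] k e; first by rewrite add0n in e; rewrite e.
  by rewrite hA ?IHj // ?addnS // -addSnnS.
have hB : forall j k, (j + k).+1 = N -> Gf V j k.+1 = Gf V j.+1 k.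
  move=> j k e; rewrite recB (IH j k) -?e // (IH j 0) -?e ?addn0 //.
    by rewrite comp0l !subr0.
  by rewrite ltnS leq_addr.
have hG : forall j k, (j + k)%N = N -> Gf V j k = Gf V 0 N.
  elim=> [|j IHj] k e; first by rewrite add0n in e; rewrite e.
  by rewrite -hB ?IHj // ?addnS // -addSnnS.
have e0 : Hf V 0 N = 0.
  apply: halfz.
  have := G0 V N.
  by rewrite (hG N 0 (addn0 N)) G0' (hH N 0 (addn0 N)).
by move=> j k e; rewrite (hH j k e).
Qed.

Lemma allH (K : numFieldType) (C : MonSuperCat K) (V : sVW_rep C) j k : Hf V j k = 0.
Proof.
suff : forall N j k, (j + k < N)%N -> Hf V j k = 0 by apply; exact: ltnSn.
elim=> [|N IHN] j' k' //.
rewrite ltnS leq_eqVlt => /orP [/eqP e|lt]; last exact: IHN.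
exact: (stepN IHN e).
Qed.

Unset Implicit Arguments.
Set Strict Implicit.

Theorem mainTheorem5 (K : numClosedFieldType) (C : MonSuperCat K)
  (V : sVW_rep C) (k l : nat) :
  mcomp C (b V) (mcomp C (mtens C (hpow (y V) k) (hpow (y V) l)) (bs V)) = 0.
Proof.
rewrite -(L3 (hpow (y V) k) (hpow (y V) l)) pow1 pow2.
have e : hpow (y1 V) k ∘ hpow (y2 V) l = hpow (y2 V) l ∘ hpow (y1 V) k.
  elim: k => [|k IH] /=; first by rewrite comp1f compf1.
  by rewrite -Defs.compA IH !Defs.compA (comm_pow l (y12 V)).
rewrite e -Defs.compA.
exact: allH.
Qed.
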